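(* Edges $e_i$ and $e_j$ that belong to the far case II choose the same representative iff $d(s,t,e_i) = d(s,t,e_j)$. All representatives have different lengths and $|\mathcal{R}|$ equals the number of break points. Let $R,R' \in \mathcal{R}$ be such that $R'$ is the next shorter representative after $R$. We have $d(s,z_{R}) < d(s,z_{R'})$ and all edges represented by $R$ lie on the subpath $P(s,t)[z_R .. z_{R'}]$. There is exactly one break point on $P(s,t)[z_R .. z_{R'}]$, the one corresponding to length $w(R)$.
   Context: Let $G$ be an undirected graph with $n$ vertices and integer edge weights in $[1,M]$, $s$ a fixed source vertex, and $T_s$ a shortest path tree of $G$ rooted at $s$; $P(s,t)$ denotes the $s$-$t$-path in $T_s$, $d(\cdot,\cdot)$ distances in $G$, and $d(s,t,e)$ the length of a shortest $s$-$t$-path in $G-e$ (a replacement path $P(s,t,e)$). Every replacement path is assumed to consist of a common prefix with $P(s,t)$, a detour part that is edge-disjoint from $P(s,t)$, and a common suffix with $P(s,t)$. A set of pivots $D \subseteq V$ is fixed such that every path $P(s,t)$ in $T_s$ contains a pivot among its last $\sqrt{n}$ vertices; for a target $t$, let $x$ be the pivot on $P(s,t)$ closest to $t$. An edge $e$ on $P(s,t)[s..x]$ belongs to the far case II (w.r.t. $t$) if $d(s,t,e) < d(s,x,e) + d(x,t)$, i.e., no replacement path for $e$ uses $x$. Let $e_1, \dots, e_k$ be the far-case-II edges ordered by increasing distance from $s$; then $d(s,t,e_1) \ge \dots \ge d(s,t,e_k)$. Let $u_i$ be the endpoint of $e_i$ closer to $s$; $u_i$ is a break point if $d(s,t,e_i)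 > d(s,t,e_{i+1})$. The edges choose representative replacement paths one after another in the order $e_1, \dots, e_k$: edge $e_i$ first checks whether one of its replacement paths has already been selected by an earlier edge $e_h$, $h<i$; if so it takes that one, otherwise it chooses one of its replacement paths arbitrarily. $\mathcal{R}$ is the set of chosen representatives, and for $R \in \mathcal{R}$, $z_R$ is the first vertex of the detour part of $R$; $w(R)$ is the length of $R$. *)

(* Defs.v *)
From mathcomp Require Import all_boot.
From Stdlib Require Import ClassicalEpsilon.
Set Implicit Arguments.
Unset Strict Implicit.
Unset Printing Implicit Defensive.

Definition dec (P : Prop) : bool :=
  if excluded_middle_informative P then true else false.

Lemma decP (P : Prop) : reflect P (dec P).
Proof. by rewrite /dec; case: excluded_middle_informative => h; constructor. Qed.

(* Extended naturals: [None] is +infinity (no path). *)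
Definition olt (a b : option nat) : bool :=
  match a, b with
  | Some m, Some n => m < n
  | Some _, None => true
  | None, _ => false
  end.

Definition oadd (a b : option nat) : option nat :=
  match a, b with
  | Some m, Some n => Some (m + n)
  | _, _ => None
  end.

Section Graph.
Variables (T : finType) (adj : rel T) (w : T -> T -> nat).

Definition simple_weighted_graph (M : nat) : Prop :=
  [/\ forall u v, adj u v = adj v u,
      forall u, ~~ adj u u,
      forall u v, w u v = w v u &
      forall u v, adj u v -> 1 <= w u v <= M].

(* A path/walk is given by its vertex sequence. *)
Definition edges_of (p : seq T) : seq (T * T) := zip p (behead p).

Definition weight (p : seq T) : nat := sumn [seq w e.1 e.2 | e <- edges_of p].

Definition is_walk (u v : T) (p : seq T) : Prop :=
  exists q, [/\ p = u :: q, path adj u q & last u q = v].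

Definition same_edge (e f : T * T) : bool := (f == e) || (f == (e.2, e.1)).

(* walk from u to v in G - F (F a set of forbidden undirected edges) *)
Definition walk_av (F : pred (T * T)) (u v : T) (p : seq T) : Prop :=
  is_walk u v p /\ ~~ has F (edges_of p).

Lemma dist_ex F u v :
  (exists p, walk_av F u v p) ->
  exists n, dec (exists p, walk_av F u v p /\ weight p = n).
Proof. by case=> p hp; exists (weight p); apply/decP; exists p. Qed.

(* length of a shortest u-v path in G - F, None if there is none *)
Definition dist_av (F : pred (T * T)) (u v : T) : option nat :=
  match excluded_middle_informative (exists p, walk_av F u v p) with
  | left H => Some (ex_minn (dist_ex H))
  | right _ => None
  end.

Definition dist (u v : T) : option nat := dist_av (fun _ => false) u v.

Definition dist_e (u v : T) (e : T * T) : option nat := dist_av (same_edge e) u v.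

Definition is_repl (u v : T) (e : T * T) (R : seq T) : Prop :=
  walk_av (same_edge e) u v R /\ dist_e u v e = Some (weight R).

Variables (s : T) (tp : T -> seq T).

(* tp v = P(s,v) : the s-v path in the shortest path tree T_s rooted at s.
   T_s spans the vertices reachable from s; each tree path is a shortest
   path, and tree paths are prefix-closed (so they form a tree). *)
Definition sp_tree : Prop :=
  forall v, dist s v != None ->
    [/\ is_walk s v (tp v), dist s v = Some (weight (tp v)) &
        forall i, i < size (tp v) -> take i.+1 (tp v) = tp (nth s (tp v) i)].

Definition pedge (P : seq T) (j : nat) : T * T := (nth s P j, nth s P j.+1).

Definition csqrt (n : nat) : nat :=
  let r := Nat.sqrt n in if r * r == n then r else r.+1.

Definition pivot_set (D : {set T}) : Prop :=
  forall v, dist s v != None ->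
    has (fun y => y \in D) (drop (size (tp v) - csqrt #|T|) (tp v)).

(* Structural assumption: every replacement path P(s,v,e) for an edge e of
   P(s,v) consists of a common prefix P(s,v)[s..p_i], a detour part
   p_i :: mid ++ [p_k] edge-disjoint from P(s,v), and a common suffix
   P(s,v)[p_k..v]. *)
Definition repl_structure : Prop :=
  forall v, dist s v != None ->
  forall j, j.+1 < size (tp v) ->
  forall R, is_repl s v (pedge (tp v) j) R ->
  exists i k mid,
    [/\ i < size (tp v), k < size (tp v),
        R = take i.+1 (tp v) ++ mid ++ drop k (tp v) &
        ~~ has (fun f => has (same_edge f) (edges_of (tp v)))
               (edges_of (nth s (tp v) i :: rcons mid (nth s (tp v) k)))].

(* first vertex of the detour part of R: the last vertex of the maximal
   common prefix of P and R *)
Fixpoint lcp (p q : seq T) : nat :=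
  match p, q with
  | a :: p', b :: q' => if a == b then (lcp p' q').+1 else 0
  | _, _ => 0
  end.

Definition detour_start (P R : seq T) : T := last s (take (lcp P R) R).

Variables (t : T) (D : {set T}).

Definition pivot : T := last s [seq y <- tp t | y \in D].
Definition pivot_pos : nat := index pivot (tp t).

Definition dst (j : nat) : option nat := dist_e s t (pedge (tp t) j).

Definition far2 (j : nat) : bool :=
  (j < pivot_pos) &&
  olt (dst j) (oadd (dist_e s pivot (pedge (tp t) j)) (dist pivot t)).

Definition far2_list : seq nat := [seq j <- iota 0 pivot_pos | far2 j].

(* u_j (the endpoint of e_j closer to s, at position j of P(s,t)) is a break
   point: d(s,t,e_i) > d(s,t,e_{i+1}) for the next far-case-II edge; by
   convention the last far-case-II edge also yields a break point *)
Definition break_point (j : nat) : bool :=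
  far2 j &&
  (let m := index j far2_list in
   if m.+1 < size far2_list then olt (dst (nth 0 far2_list m.+1)) (dst j)
   else true).

Definition rep_choice (rep : nat -> seq T) : Prop :=
  forall j, far2 j ->
    is_repl s t (pedge (tp t) j) (rep j) /\
    ((exists h, [/\ h < j, far2 h & is_repl s t (pedge (tp t) j) (rep h)]) ->
     exists h, [/\ h < j, far2 h, is_repl s t (pedge (tp t) j) (rep h)
                  & rep j = rep h]).

Definition reps (rep : nat -> seq T) : seq (seq T) :=
  undup [seq rep j | j <- far2_list].

End Graph.

(* Main.v *)
Require Import Defs.
From mathcomp Require Import all_boot.
From Stdlib Require Import ClassicalEpsilon.
From mathcomp Require Import zify.
Set Implicit Arguments.
Unset Strict Implicit.
Unset Printing Implicit Defensive.

Section Walks.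
Variables (T : finType) (adj : rel T) (w : T -> T -> nat).

Lemma edges_cons2 (a b : T) l : edges_of (a :: b :: l) = (a, b) :: edges_of (b :: l).
Proof. by []. Qed.

Lemma edges_cat (p q : seq T) y :
  edges_of (p ++ y :: q) = edges_of (rcons p y) ++ edges_of (y :: q).
Proof.
elim: p => [//|a p IH]; case: p IH => [|b p] IH //=.
idtac.
move: IH; rewrite /= => IH; by rewrite !edges_cons2 IH.
Qed.

Lemma weight_cat (p q : seq T) y :
  weight w (p ++ y :: q) = weight w (rcons p y) + weight w (y :: q).
Proof. by rewrite /weight edges_cat map_cat sumn_cat. Qed.

Lemma weight_rcons2 (p : seq T) x y :
  weight w (rcons (rcons p x) y) = weight w (rcons p x) + w x y.
Proof.
have -> : rcons (rcons p x) y = p ++ x :: [:: y] by rewrite -!cats1 -catA.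
by rewrite weight_cat /weight /= addn0.
Qed.

Lemma walk_split u v (p1 p2 : seq T) x :
  is_walk adj u v (p1 ++ x :: p2) ->
  is_walk adj u x (rcons p1 x) /\ is_walk adj x v (x :: p2).
Proof.
case=> q [hp hpath hlast]; case: p1 hp => [|a p1] /= [ha hq].
  by subst; split; [exists [::] | eexists; split; [reflexivity| |]].
subst a q; move: hpath; rewrite cat_path /= => /and3P [h1 h2 h3].
split; first by exists (rcons p1 x); rewrite rcons_path h1 h2 last_rcons.
by exists p2; split=> //; rewrite last_cat /= in hlast.
Qed.

Lemma has_edges_cat (F : pred (T * T)) (p q : seq T) y :
  has F (edges_of (p ++ y :: q)) = has F (edges_of (rcons p y)) || has F (edges_of (y :: q)).
Proof. by rewrite edges_cat has_cat. Qed.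

Lemma dist_le F u v p : walk_av adj F u v p ->
  exists n, dist_av adj w F u v = Some n /\ n <= weight w p.
Proof.
move=> hp; rewrite /dist_av; case: excluded_middle_informative => [H|[]]; last by exists p.
eexists; split; first reflexivity.
case: ex_minnP => m hm hmin; apply: hmin.
rewrite /dec; case: excluded_middle_informative => // [[]]; by exists p.
Qed.

Lemma has_false (l : seq (T * T)) : has (fun _ => false) l = false.
Proof. by elim: l. Qed.

Lemma mem_edgesP x0 (p : seq T) f :
  reflect (exists2 a, a.+1 < size p & f = (nth x0 p a, nth x0 p a.+1)) (f \in edges_of p).
Proof.
elim: p => [|a p IH]; first by constructor; case.
case: p IH => [|b p] IH.
  by constructor; case.
rewrite edges_cons2 in_cons; apply: (iffP orP).
  case=> [/eqP ->|/IH [c hc ->]]; first by exists 0.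
  by exists c.+1.
case=> [[|c] hc Ef]; first by left; rewrite Ef.
by right; apply/IH; exists c.
Qed.

End Walks.

Lemma lcp_cat (T : finType) (a b c : seq T) : lcp (a ++ b) (a ++ c) = size a + lcp b c.
Proof. by elim: a => //= x a ->; rewrite eqxx. Qed.

Section Main.
Variables (T : finType) (adj : rel T) (w : T -> T -> nat) (M : nat)
  (s t : T) (tp : T -> seq T) (D : {set T}) (rep : nat -> seq T).
Hypotheses (hG : simple_weighted_graph adj w M) (hT : sp_tree adj w s tp)
  (hRS : repl_structure adj w s tp) (ht : dist adj w s t != None)
  (hrep : rep_choice adj w s tp t D rep).

Local Notation P := (tp t).
Local Notation px := (pivot_pos s tp t D).
Local Notation x := (pivot s tp t D).
Local Notation far2 := (far2 adj w s tp t D).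
Local Notation dst := (dst adj w s tp t).
Local Notation pe := (pedge s (tp t)).

Definition dv j := odflt 0 (dst j).

Lemma P_walk : is_walk adj s t P.
Proof. by case: (hT ht). Qed.

Lemma P_prefix i : i < size P -> take i.+1 P = tp (nth s P i).
Proof. by case: (hT ht) => _ _; apply. Qed.

Lemma P_uniq : uniq P.
Proof.
apply/(uniqP s) => a b ha hb e.
have := P_prefix ha; rewrite e -P_prefix // => /(congr1 size).
by rewrite !size_takel // => -[].
Qed.

Lemma pivot_in : px < size P /\ nth s P px = x.
Proof.
have xP : x \in P.
  rewrite /pivot; have := mem_last s [seq y <- P | y \in D]; rewrite in_cons => /orP [/eqP->|].
    by case: P_walk => q [-> _ _]; rewrite mem_head.
  by rewrite mem_filter => /andP [].
by rewrite /pivot_pos index_mem nth_index.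
Qed.

Lemma P_adj a : a.+1 < size P -> adj (nth s P a) (nth s P a.+1).
Proof.
case: P_walk => q [-> hp _] /= ha.
by move/(pathP s): hp => /(_ a ha).
Qed.

Lemma P_weight_gt a : a.+1 < size P -> 0 < w (nth s P a) (nth s P a.+1).
Proof. by move=> ha; case: hG => _ _ _ /(_ _ _ (P_adj ha)) /andP []. Qed.

Lemma dist_prefix i : i < size P -> dist adj w s (nth s P i) = Some (weight w (take i.+1 P)).
Proof.
move=> hi.
have hw : is_walk adj s (nth s P i) (take i.+1 P).
  have := P_walk; rewrite -{1}(cat_take_drop i P) (drop_nth s hi) => /walk_split [h _].
  by rewrite (take_nth s hi).
have [n [hn _]] := dist_le w (F := fun _ => false) (conj hw (negbT (has_false _))).
have hne : dist adj w s (nth s P i) != None by rewrite /dist hn.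
by case: (hT hne) => _ -> _; rewrite -P_prefix.
Qed.

Lemma weight_take_step n : n.+1 < size P ->
  weight w (take n.+1 P) < weight w (take n.+2 P).
Proof.
move=> hn; rewrite (take_nth s hn) (take_nth s (ltnW hn)) weight_rcons2.
by rewrite -(take_nth s (ltnW hn)) -ltn_subLR // subnn P_weight_gt.
Qed.

Lemma weight_take_lt a b : a < b -> b < size P ->
  weight w (take a.+1 P) < weight w (take b.+1 P).
Proof.
elim: b => // b IH; rewrite ltnS leq_eqVlt => /orP [/eqP -> hb|hab hb].
  exact: weight_take_step.
apply: ltn_trans (IH hab (ltnW hb)) (weight_take_step hb).
Qed.

Lemma pedge_inj a b : a.+1 < size P -> b.+1 < size P ->
  same_edge (pe a) (pe b) -> a = b.
Proof.
move=> ha hb; rewrite /same_edge /pedge /= => /orP [] /eqP [].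
  by move/eqP; rewrite nth_uniq ?P_uniq ?(ltnW ha) ?(ltnW hb) // => /eqP.
move=> /eqP e1 /eqP e2; move: e1 e2.
rewrite !nth_uniq ?P_uniq ?(ltnW ha) ?(ltnW hb) // => /eqP e1 /eqP e2.
by move: e1 e2 => -> /eqP; rewrite -{2}[a]addn0 -addn2 eqn_add2l.
Qed.

Lemma dst_def j : dst j = dist_e adj w s t (pe j).
Proof. by []. Qed.

Lemma far2_lt j : far2 j -> j < px.
Proof. by case/andP. Qed.

Lemma far2_some j : far2 j -> dst j = Some (dv j).
Proof. by case/andP => _; rewrite /dv; case: (dst j). Qed.

Lemma repl_weight j R : far2 j -> is_repl adj w s t (pe j) R -> weight w R = dv j.
Proof. by move=> /far2_some hs [_ hd]; move: hs; rewrite dst_def hd => -[]. Qed.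

Lemma same_edge_sym (e f : T * T) : same_edge e f -> same_edge f e.
Proof.
case: e f => a b [c d]; rewrite /same_edge /= => /orP [] /eqP [-> ->];
by rewrite eqxx ?orbT.
Qed.


Lemma detour j R : far2 j -> is_repl adj w s t (pe j) R ->
  exists i, [/\ i <= j, detour_start s P R = nth s P i &
     forall m, i <= m -> m < px -> walk_av adj (same_edge (pe m)) s t R].
Proof.
move=> hf hrepl.
have hjx := far2_lt hf.
have [hpx hxP] := pivot_in.
have hjs : j.+1 < size P by apply: leq_ltn_trans hjx hpx.
have hxR : x \notin R.
  case: hrepl => [[hw hav] hd].
  apply/negP => xR; move: hw hav hd; case/splitPr: xR => R1 R2 hw hav hd.
  have [hw1 hw2] := walk_split hw.
  move: hav; rewrite has_edges_cat negb_or => /andP [hav1 hav2].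
  have [n1 [e1 l1]] := dist_le w (conj hw1 hav1).
  have [n2 [e2 l2]] := dist_le w (F := fun _ => false) (conj hw2 (negbT (has_false _))).
  move: hf; rewrite /Defs.far2 dst_def hd /dist_e e1 /dist e2 /= weight_cat => /andP [_].
  by rewrite ltnNge => /negP; apply; apply: leq_add.
have [i [k [mid [hi hk hReq hdis]]]] := hRS ht hjs hrepl.
case: hrepl => [[hw hav] hd].
have hix : i < px.
  rewrite ltnNge; apply/negP => hle; move/negP: hxR; apply.
  rewrite hReq mem_cat -hxP; apply/orP; left.
  have -> : nth s P px = nth s (take i.+1 P) px by rewrite nth_take // ltnS.
  by apply: mem_nth; rewrite size_takel // ltnS.
have hkx : px < k.
  rewrite ltnNge; apply/negP => hle; move/negP: hxR; apply.
  rewrite hReq !mem_cat -hxP; apply/orP; right; apply/orP; right.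
  have -> : nth s P px = nth s (drop k P) (px - k) by rewrite nth_drop subnKC.
  apply: mem_nth; rewrite size_drop. set n := size (tp t) in hpx hle |- *. lia.
have hi1 : i.+1 < size P by lia.
have hRe : edges_of R = edges_of (take i.+1 P) ++
    edges_of (nth s P i :: rcons mid (nth s P k)) ++ edges_of (drop k P).
  rewrite hReq (take_nth s hi) cat_rcons edges_cat -(take_nth s hi); congr (_ ++ _).
  by rewrite (drop_nth s hk) -cat_cons edges_cat.
have hdet : forall f, f \in edges_of (nth s P i :: rcons mid (nth s P k)) ->
    forall m, m.+1 < size P -> ~~ same_edge (pe m) f.
  move=> f hf' m hm; apply/negP => hse; move/hasPn: hdis => /(_ f hf') /negP; apply.
  apply/hasP; exists (pe m); first by apply/(mem_edgesP s); exists m.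
  exact: same_edge_sym.
have hij : i <= j.
  rewrite leqNgt; apply/negP => hji; move: hav; rewrite hRe !has_cat.
  have -> : has (same_edge (pe j)) (edges_of (take i.+1 P)).
    apply/hasP; exists (pe j); last by rewrite /same_edge eqxx.
    apply/(mem_edgesP s); exists j.
      by rewrite size_takel; lia.
    by rewrite /pedge !nth_take //; lia.
  by [].
exists i; split => //.
  rewrite /detour_start.
  have hlcp : lcp P R = i.+1.
    rewrite hReq -{1}(cat_take_drop i.+1 P) lcp_cat size_takel ?(drop_nth s hi1); last by lia.
    case: mid hReq hdis hdet hRe => [|y mid] hReq hdis hdet hRe /=.
      rewrite (drop_nth s hk) /=; case: eqP => [e|]; last by rewrite addn0.
      exfalso.
      have ek : k = i.+1 by apply/eqP; rewrite -(nth_uniq s hk hi1 P_uniq) e.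
      have := hdet (nth s P i, nth s P k) (mem_head _ _) i hi1.
      by rewrite /same_edge /pedge ek eqxx.
    case: eqP => [e|]; last by rewrite addn0.
    exfalso.
    have := hdet (nth s P i, y) (mem_head _ _) i hi1.
    by rewrite /same_edge /pedge -e eqxx.
  by rewrite hlcp hReq take_size_cat ?size_takel // (take_nth s hi) last_rcons.
move=> m him hmx; split => //.
have hm1 : m.+1 < size P by lia.
rewrite hRe !has_cat !negb_or; apply/and3P; split.
- apply/hasPn => f /(mem_edgesP s) [a]; rewrite size_takel // => ha ->.
  rewrite !nth_take //; last by lia.
  apply/negP => /(pedge_inj hm1) h; have := h ltac:(lia); lia.
- by apply/hasPn => f hf'; apply: hdet.
- apply/hasPn => f /(mem_edgesP s) [a]; rewrite size_drop => ha ->.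
  rewrite !nth_drop addnS.
  apply/negP => /(pedge_inj hm1) h; have := h ltac:(lia); lia.
Qed.


Lemma nthP_inj a b : a < size P -> b < size P -> nth s P a = nth s P b -> a = b.
Proof. by move=> ha hb /eqP; rewrite nth_uniq ?P_uniq // => /eqP. Qed.

Lemma avoid_dist m R : far2 m -> walk_av adj (same_edge (pe m)) s t R -> dv m <= weight w R.
Proof.
move=> hm hw; have [n [hn hle]] := dist_le w hw.
by move: (far2_some hm); rewrite dst_def /dist_e hn => -[<-].
Qed.

Lemma rep_repl j : far2 j -> is_repl adj w s t (pe j) (rep j).
Proof. by move=> hj; case: (hrep hj). Qed.

Lemma rep_weight j : far2 j -> weight w (rep j) = dv j.
Proof. by move=> hj; apply: repl_weight hj (rep_repl hj). Qed.

Lemma mono a b : far2 a -> far2 b -> a < b -> dv b <= dv a.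
Proof.
move=> ha hb hab; have hbx := far2_lt hb; have [i [hia _ hav]] := detour ha (rep_repl ha).
rewrite -(rep_weight ha); apply: avoid_dist hb _; apply: hav.
  by apply: leq_trans hia (ltnW hab).
exact: hbx.
Qed.

Lemma eq_repl a b : far2 a -> far2 b -> a < b -> dv a = dv b ->
  is_repl adj w s t (pe b) (rep a).
Proof.
move=> ha hb hab he; have [i [hia _ hav]] := detour ha (rep_repl ha).
split; first by apply: hav; [apply: leq_trans hia (ltnW hab) | exact: far2_lt hb].
by rewrite -dst_def (far2_some hb) (rep_weight ha) he.
Qed.

Lemma claim1_dir j : far2 j -> forall i, far2 i -> i < j -> dv i = dv j -> rep i = rep j.
Proof.
elim/ltn_ind: j => j IH hj i hi hij he.
have hr := eq_repl hi hj hij he.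
case: (hrep hj) => _ /(_ (ex_intro _ i (And3 hij hi hr))) [h [hhj hh hrh ->]].
have ehj : dv h = dv j by rewrite -(rep_weight hh) (repl_weight hj hrh).
case: (ltngtP i h) => [ih|hi'|-> //].
  by apply: (IH h hhj hh i hi ih); rewrite he ehj.
by apply/esym; apply: (IH i hij hi h hh hi'); rewrite he ehj.
Qed.

Lemma dv_eq_rep i j : far2 i -> far2 j -> dv i = dv j -> rep i = rep j.
Proof.
move=> hi hj he; case: (ltngtP i j) => [h|h|-> //].
  exact: claim1_dir.
by apply/esym; apply: claim1_dir.
Qed.

Lemma claim1 i j : far2 i -> far2 j -> (rep i = rep j <-> dst i = dst j).
Proof.
move=> hi hj; rewrite (far2_some hi) (far2_some hj); split.
  by move=> e; rewrite -(rep_weight hi) -(rep_weight hj) e.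
by case; apply: dv_eq_rep.
Qed.

Lemma mem_far2_list j : (j \in far2_list adj w s tp t D) = far2 j.
Proof.
rewrite mem_filter mem_iota add0n /=; apply/andP/idP => [[] //|h].
by split => //; apply: far2_lt.
Qed.

Lemma memRR R : R \in reps adj w s tp t D rep -> exists2 a, far2 a & R = rep a.
Proof. by rewrite mem_undup => /mapP [a]; rewrite mem_far2_list => ha ->; exists a. Qed.

Lemma memRR' a : far2 a -> rep a \in reps adj w s tp t D rep.
Proof. by move=> ha; rewrite mem_undup; apply: map_f; rewrite mem_far2_list. Qed.

Lemma BP_char j : far2 j ->
  (break_point adj w s tp t D j <-> forall y, far2 y -> j < y -> dv y != dv j).
Proof.
move=> hj; rewrite /break_point hj /=.
set L := far2_list adj w s tp t D.
have hsort : sorted ltn L by apply: sorted_filter; [exact: ltn_trans | exact: iota_ltn_sorted].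
have hmono : forall p q, p < size L -> q < size L -> nth 0 L p < nth 0 L q -> p < q.
  move=> p q hp hq; case: (ltngtP p q) => [//|hqp|-> ]; last by rewrite ltnn.
  have := sorted_ltn_nth ltn_trans 0 hsort q p hq hp hqp.
  by move=> h1 h2; have := ltn_trans h1 h2; rewrite ltnn.
have hjL : j \in L by rewrite mem_far2_list.
set m := index j L.
have hm : m < size L by rewrite index_mem.
have hnj : nth 0 L m = j by rewrite nth_index.
have after : forall y, far2 y -> j < y -> m.+1 < size L /\ nth 0 L m.+1 <= y.
  move=> y hy hjy.
  have hyL : y \in L by rewrite mem_far2_list.
  have hp : index y L < size L by rewrite index_mem.
  have hmp : m < index y L by apply: hmono; rewrite // hnj nth_index.
  split; first by apply: leq_ltn_trans hmp hp.
  move: hmp; rewrite leq_eqVlt => /orP [/eqP ->|h]; first by rewrite nth_index.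
  rewrite -{1}(nth_index 0 hyL); apply: ltnW.
  exact: (sorted_ltn_nth ltn_trans 0 hsort m.+1 (index y L) (ltn_trans h hp) hp h).
case: ifP => hml.
  set n := nth 0 L m.+1.
  have hn : far2 n by rewrite -mem_far2_list mem_nth.
  have hjn : j < n by rewrite -hnj; exact: (sorted_ltn_nth ltn_trans 0 hsort m m.+1 hm hml (ltnSn m)).
  rewrite (far2_some hn) (far2_some hj) /=; split.
    move=> hlt y hy hjy; have [_ hny] := after y hy hjy.
    rewrite neq_ltn; apply/orP; left.
    move: hny; rewrite leq_eqVlt => /orP [/eqP <- // | hny'].
    exact: leq_ltn_trans (mono hn hy hny') hlt.
  move=> H; have := H n hn hjn; have := mono hj hn hjn.
  by rewrite ltn_neqAle => -> ->.
split => // _ y hy hjy; have [h _] := after y hy hjy.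
by rewrite h in hml.
Qed.

Lemma gmax a : far2 a -> exists j, [/\ far2 j, dv j = dv a &
   forall y, far2 y -> dv y = dv a -> y <= j].
Proof.
move=> ha.
have ex : exists y, far2 y && (dv y == dv a) by exists a; rewrite ha eqxx.
have ub : forall y, far2 y && (dv y == dv a) -> y <= px.
  by move=> y /andP [hy _]; apply: ltnW; apply: far2_lt.
case: (ex_maxnP ex ub) => j /andP [hj /eqP hja] hmax.
exists j; split => // y hy hya; apply: hmax; by rewrite hy hya eqxx.
Qed.

Lemma gmax_bp a j : far2 a -> far2 j -> dv j = dv a ->
  (forall y, far2 y -> dv y = dv a -> y <= j) -> break_point adj w s tp t D j.
Proof.
move=> ha hj hja hmax; apply/(BP_char hj) => y hy hjy; apply/eqP => e.
by have := hmax y hy (etrans e hja); rewrite leqNgt hjy.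
Qed.

Lemma bp_far2 j : break_point adj w s tp t D j -> far2 j.
Proof. by case/andP. Qed.


Lemma main_res :
  let P := tp t in
  let RR := reps adj w s tp t D rep in
  [/\ forall i j, far2 i -> far2 j ->
        (rep i = rep j <-> dst i = dst j),
      {in RR &, forall R R', weight w R = weight w R' -> R = R'},
      size RR = count (break_point adj w s tp t D) (iota 0 (pivot_pos s tp t D)) &
      forall R R', R \in RR -> R' \in RR -> weight w R' < weight w R ->
        (forall R'', R'' \in RR ->
           ~ (weight w R' < weight w R'' /\ weight w R'' < weight w R)) ->
        let zR := detour_start s P R in
        let zR' := detour_start s P R' in
        [/\ olt (dist adj w s zR) (dist adj w s zR'),
            (forall j, far2 j -> rep j = R ->
               index zR P <= j /\ j.+1 <= index zR' P) &
            exists j0,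
              [seq j <- iota 0 (pivot_pos s tp t D)
                 | break_point adj w s tp t D j
                   && (index zR P <= j) && (j.+1 <= index zR' P)] = [:: j0]
              /\ dst j0 = Some (weight w R)]].
Proof.
move=> P0 RR; rewrite /P0 /RR {P0 RR}.
have [hpx _] := pivot_in.
split.
- exact: claim1.
- move=> R R' /memRR [a ha ->] /memRR [b hb ->].
  rewrite (rep_weight ha) (rep_weight hb); exact: dv_eq_rep.
- rewrite -size_filter.
  set BP := [seq j <- iota 0 px | break_point adj w s tp t D j].
  have hBP : forall j, (j \in BP) = break_point adj w s tp t D j.
    move=> j; rewrite mem_filter mem_iota add0n /=; apply/andP/idP => [[] //|h].
    by split => //; apply: far2_lt; apply: bp_far2.
  have inj : {in BP &, injective rep}.
    move=> j j'; rewrite !hBP => bj bj' e.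
    have hj := bp_far2 bj; have hj' := bp_far2 bj'.
    have := (claim1 hj hj').1 e; rewrite (far2_some hj) (far2_some hj') => -[ed].
    case: (ltngtP j j') => [h|h|//].
      by have := (BP_char hj).1 bj j' hj' h; rewrite ed eqxx.
    by have := (BP_char hj').1 bj' j hj h; rewrite ed eqxx.
  have hperm : perm_eq (reps adj w s tp t D rep) [seq rep j | j <- BP].
    apply: uniq_perm; first exact: undup_uniq.
      by rewrite map_inj_in_uniq // filter_uniq // iota_uniq.
    move=> R; apply/idP/idP.
      move=> /memRR [a ha ->].
      have [j [hj hja hmax]] := gmax ha.
      rewrite (dv_eq_rep ha hj (esym hja)); apply: map_f.
      by rewrite hBP; apply: gmax_bp ha hj hja hmax.
    by move=> /mapP [j]; rewrite hBP => /bp_far2 hj ->; apply: memRR'.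
  by rewrite (perm_size hperm) size_map.
move=> R R' hR hR' hlt hnext.
set zR := detour_start s P R; set zR' := detour_start s P R'.
case/memRR: hR => a ha eRa; case/memRR: hR' => b hb eRb.
have hRa : is_repl adj w s t (pe a) R by rewrite eRa; apply: rep_repl.
have hRb : is_repl adj w s t (pe b) R' by rewrite eRb; apply: rep_repl.
have wR : weight w R = dv a by rewrite eRa rep_weight.
have wR' : weight w R' = dv b by rewrite eRb rep_weight.
have [iR [hiRa hzR avR]] := detour ha hRa.
have [iR' [hiRb hzR' avR']] := detour hb hRb.
have hax := far2_lt ha; have hbx := far2_lt hb.
have hiRs : iR < size P by apply: leq_ltn_trans hiRa (ltn_trans hax hpx).
have hiRs' : iR' < size P by apply: leq_ltn_trans hiRb (ltn_trans hbx hpx).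
have idx : index zR P = iR by rewrite /zR hzR index_uniq // P_uniq.
have idx' : index zR' P = iR' by rewrite /zR' hzR' index_uniq // P_uniq.
have key : forall j, far2 j -> rep j = R -> iR <= j /\ j < iR'.
  move=> j hj hrj.
  have hRj : is_repl adj w s t (pe j) R by rewrite -hrj; apply: rep_repl.
  split.
    have [i' [hi'j hz' _]] := detour hj hRj.
    have hi's : i' < size P by apply: leq_ltn_trans hi'j (ltn_trans (far2_lt hj) hpx).
    by rewrite (nthP_inj hiRs hi's (etrans (esym hzR) hz')).
  rewrite ltnNge; apply/negP => hle.
  have := avoid_dist hj (avR' j hle (far2_lt hj)).
  by rewrite -(repl_weight hj hRj) leqNgt hlt.
have [hiRa' haR'] := key a ha (esym eRa).
split.
- rewrite /zR /zR' hzR hzR' !dist_prefix //=.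
  exact: weight_take_lt (leq_ltn_trans hiRa haR') hiRs'.
- by move=> j hj hrj; rewrite idx idx'; apply: key.
have [jR [hjR hjRa hmax]] := gmax ha.
have hrjR : rep jR = R by rewrite eRa; apply: dv_eq_rep.
exists jR; split; last by rewrite (far2_some hjR) hjRa wR.
rewrite (@eq_in_filter _ _ (pred1 jR)) ?filter_pred1_uniq ?iota_uniq //.
  by rewrite mem_iota add0n /= far2_lt.
move=> j _ /=; rewrite idx idx'; apply/idP/eqP => [/andP [/andP [hbp hiRj] hjiR']|->].
  have hj := bp_far2 hbp.
  have hja : dv j = dv a.
    case: (ltngtP (dv j) (dv a)) => [hjl|hjg|//].
      exfalso.
      case: (ltngtP (weight w R') (dv j)) => [h1|h1|h1].
      + by apply: (hnext (rep j) (memRR' hj)); rewrite rep_weight // wR.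
      + case: (ltnP j b) => hjb.
          by have := mono hj hb hjb; rewrite -wR' leqNgt h1.
        by move: hjiR'; rewrite ltnNge (leq_trans hiRb hjb).
      + have erj : rep j = R' by rewrite eRb; apply: (dv_eq_rep hj hb); rewrite -wR' h1.
        have hRj : is_repl adj w s t (pe j) R' by rewrite -erj; apply: rep_repl.
        have [i' [hi'j hz' _]] := detour hj hRj.
        have hi's : i' < size P by apply: leq_ltn_trans hi'j (ltn_trans (far2_lt hj) hpx).
        have ei : iR' = i' by apply: nthP_inj hiRs' hi's (etrans (esym hzR') hz').
        by move: hjiR'; rewrite ei ltnNge hi'j.
    have := avoid_dist hj (avR j hiRj (far2_lt hj)).
    by rewrite wR leqNgt hjg.
  have hjj : j <= jR by apply: hmax.
  move: hjj; rewrite leq_eqVlt => /orP [/eqP //|hlt'].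
  by have := (BP_char hj).1 hbp jR hjR hlt'; rewrite hjRa hja eqxx.
have [h1 h2] := key jR hjR hrjR.
by rewrite h1 h2 andbT andbT; apply: gmax_bp ha hjR hjRa hmax.
Qed.

End Main.

Theorem lemma7 (T : finType) (adj : rel T) (w : T -> T -> nat) (M : nat)
  (s t : T) (tp : T -> seq T) (D : {set T}) (rep : nat -> seq T) :
  simple_weighted_graph adj w M ->
  sp_tree adj w s tp ->
  pivot_set adj w s tp D ->
  repl_structure adj w s tp ->
  dist adj w s t != None ->
  rep_choice adj w s tp t D rep ->
  let P := tp t in
  let RR := reps adj w s tp t D rep in
  [/\ (* e_i, e_j choose the same representative iff d(s,t,e_i) = d(s,t,e_j) *)
      forall i j, far2 adj w s tp t D i -> far2 adj w s tp t D j ->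
        (rep i = rep j <-> dst adj w s tp t i = dst adj w s tp t j),
      (* all representatives have different lengths *)
      {in RR &, forall R R', weight w R = weight w R' -> R = R'},
      (* |R| = number of break points *)
      size RR = count (break_point adj w s tp t D) (iota 0 (pivot_pos s tp t D)) &
      (* R' is the next shorter representative after R *)
      forall R R', R \in RR -> R' \in RR -> weight w R' < weight w R ->
        (forall R'', R'' \in RR ->
           ~ (weight w R' < weight w R'' /\ weight w R'' < weight w R)) ->
        let zR := detour_start s P R in
        let zR' := detour_start s P R' in
        [/\ olt (dist adj w s zR) (dist adj w s zR'),
            (* every edge represented by R lies on P(s,t)[zR..zR'] *)
            (forall j, far2 adj w s tp t D j -> rep j = R ->
               index zR P <= j /\ j.+1 <= index zR' P) &
            (* exactly one break point (edge) on P(s,t)[zR..zR'], namely the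
               one with d(s,t,e_j) = w(R) *)
            exists j0,
              [seq j <- iota 0 (pivot_pos s tp t D)
                 | break_point adj w s tp t D j
                   && (index zR P <= j) && (j.+1 <= index zR' P)] = [:: j0]
              /\ dst adj w s tp t j0 = Some (weight w R)]].
Proof.
move=> hG hT _ hRS ht hrep.
exact: (main_res hG hT hRS ht hrep).
Qed.
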